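(* Let $\mathfrak{A}$ be a $(k,p,q)$-differential subalgebra of the $C^*$-algebra $\mathfrak{B}$. Then for every $a=a^*\in\mathfrak{A}$ and every $\tau>\log_k(\max\{k-1,p\})$ one has $$\|u(ta)\|_{\mathfrak{A}}=O(e^{|t|^\tau})\quad\text{as } |t|\to\infty,\ t\in\mathbb{R}.$$
   Context: Let $\mathfrak{B}$ be a $C^*$-algebra with norm $\|\cdot\|_{\mathfrak{B}}$. A $(k,p,q)$-differential subalgebra of $\mathfrak{B}$ is a $*$-subalgebra $\mathfrak{A}\subseteq\mathfrak{B}$ equipped with its own norm $\|\cdot\|_{\mathfrak{A}}$ making it a Banach $*$-algebra on which the involution is continuous, where $k\in\mathbb{Z}$, $k\geq 2$, and $p,q>0$ are reals with $p+q=k$, such that for some constant $C>0$, $\|a^k\|_{\mathfrak{A}}\leq C\|a\|_{\mathfrak{A}}^p\|a\|_{\mathfrak{B}}^q$ for all $a\in\mathfrak{A}$. For $b\in\mathfrak{A}$, $u(b)=e^{ib}-1=\sum_{j=1}^\infty \frac{i^j b^j}{j!}\in\mathfrak{A}$ (norm-convergent series in $\mathfrak{A}$). *)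

(* Defs.v *)
From HB Require Import structures.
From mathcomp Require Import all_boot all_order all_algebra.
From mathcomp Require Import all_classical all_reals all_analysis.
From mathcomp Require Import complex.

Set Implicit Arguments.
Unset Strict Implicit.
Unset Printing Implicit Defensive.
Import Order.TTheory GRing.Theory Num.Theory.
Local Open Scope ring_scope.
Local Open Scope classical_set_scope.

(* An (a priori
   non-unital) complex algebra is modelled as a complex vector space B
   (lmodType R[i]) together with an explicit multiplication [mul]. *)

Section Defs.
Variables (R : realType) (B : lmodType R[i]).

Definition assoc_bilinear (mul : B -> B -> B) : Prop :=
  [/\ (forall x y z, mul x (mul y z) = mul (mul x y) z),
      (forall x y z, mul (x + y) z = mul x z + mul y z),
      (forall x y z, mul x (y + z) = mul x y + mul x z),
      (forall (c : R[i]) x y, mul (c *: x) y = c *: mul x y) &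
      (forall (c : R[i]) x y, mul x (c *: y) = c *: mul x y)].

Definition is_involution (mul : B -> B -> B) (star : B -> B) : Prop :=
  [/\ (forall x y, star (x + y) = star x + star y),
      (forall (c : R[i]) x, star (c *: x) = conjc c *: star x),
      (forall x, star (star x) = x) &
      (forall x y, star (mul x y) = mul (star y) (star x))].

Definition is_norm_on (S : set B) (n : B -> R) : Prop :=
  [/\ (forall x, S x -> 0 <= n x),
      (forall x, S x -> n x = 0 -> x = 0),
      (forall x y, S x -> S y -> n (x + y) <= n x + n y) &
      (forall (c : R[i]) x, S x -> n (c *: x) = ComplexField.Normc.normc c * n x)].

Definition cvg_in (n : B -> R) (s : nat -> B) (x : B) : Prop :=
  forall e : R, 0 < e -> exists N : nat, forall m, (N <= m)%N -> n (s m - x) <= e.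

Definition cauchy_in (n : B -> R) (s : nat -> B) : Prop :=
  forall e : R, 0 < e -> exists N : nat,
    forall m m', (N <= m)%N -> (N <= m')%N -> n (s m - s m') <= e.

Definition complete_in (S : set B) (n : B -> R) : Prop :=
  forall s : nat -> B, (forall m, S (s m)) -> cauchy_in n s ->
    exists2 x, S x & cvg_in n s x.

Definition is_Cstar_algebra (mul : B -> B -> B) (star : B -> B) (nB : B -> R)
  : Prop :=
  [/\ assoc_bilinear mul, is_involution mul star,
      is_norm_on setT nB,
      (forall x y, nB (mul x y) <= nB x * nB y) &
      complete_in setT nB /\
      (forall x, nB (mul (star x) x) = nB x ^+ 2)].

(* n-th power a^n (meaningful for n >= 1): a^1 = a, a^(n+1) = a * a^n *)
Definition npow (mul : B -> B -> B) (a : B) (n : nat) : B :=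
  iter n.-1 (mul a) a.

Definition is_Banach_star_subalgebra (mul : B -> B -> B) (star : B -> B)
  (A : set B) (nA : B -> R) : Prop :=
  [/\ A 0,
      (forall x y, A x -> A y -> A (x + y)),
      (forall (c : R[i]) x, A x -> A (c *: x)),
      (forall x y, A x -> A y -> A (mul x y)) &
      (forall x, A x -> A (star x))] /\
  [/\ is_norm_on A nA,
      (forall x y, A x -> A y -> nA (mul x y) <= nA x * nA y),
      complete_in A nA &
      (forall x, A x -> forall e : R, 0 < e -> exists2 d : R, 0 < d &
         forall y, A y -> nA (y - x) < d -> nA (star y - star x) < e)].

Definition is_kpq_differential_subalgebra (mul : B -> B -> B) (star : B -> B)
  (nB : B -> R) (A : set B) (nA : B -> R) (k : nat) (p q : R) : Prop :=
  [/\ is_Banach_star_subalgebra mul star A nA,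
      (2 <= k)%N, 0 < p, 0 < q & p + q = k%:R] /\
      (exists2 C : R, 0 < C &
        forall a, A a -> nA (npow mul a k) <= C * (nA a `^ p) * (nB a `^ q)).

Definition u_partial (mul : B -> B -> B) (b : B) (n : nat) : B :=
  \sum_(0 <= j < n) ((('i%C : R[i]) ^+ j.+1) / (j.+1)`!%:R) *: npow mul b j.+1.

(* u(b) = e^{ib} - 1 = sum_{j>=1} i^j b^j / j!, the limit in (A, nA) of the
   partial sums (0 if no such limit exists, which does not happen for b in A). *)
Definition u (mul : B -> B -> B) (A : set B) (nA : B -> R) (b : B) : B :=
  xget 0 [set x | A x /\ cvg_in nA (u_partial mul b) x].

End Defs.

(* Main.v *)
Require Import Defs.
From HB Require Import structures.
From mathcomp Require Import all_boot all_order all_algebra.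
From mathcomp Require Import all_classical all_reals all_analysis.
From mathcomp Require Import complex.
From mathcomp Require Import ring lra zify.
Import Order.TTheory GRing.Theory Num.Theory.
Local Open Scope ring_scope.

Module Aux.
Set Implicit Arguments.
Unset Strict Implicit.
Unset Printing Implicit Defensive.
Local Open Scope ring_scope.
Local Open Scope classical_set_scope.

Definition cf (F : fieldType) (z : F) (j : nat) : F :=
  if j is 0 then 0 else z ^+ j / j`!%:R.

Lemma cf_conv (F : numFieldType) (z w : F) (m : nat) :
  \sum_(0 <= j < m.+1) z ^+ j / j`!%:R * (w ^+ (m - j)%N / (m - j)%N`!%:R)
  = (z + w) ^+ m / m`!%:R.
Proof.
rewrite addrC exprDn big_mkord mulr_suml; apply: eq_bigr => i _.
have him : (i <= m)%N by rewrite -ltnS.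
have := bin_fact him => /(congr1 (fun n => n%:R : F)).
rewrite !natrM => hb.
have f1 : (i`!%:R : F) != 0 by rewrite pnatr_eq0 -lt0n fact_gt0.
have f2 : ((m - i)%N`!%:R : F) != 0 by rewrite pnatr_eq0 -lt0n fact_gt0.
have f3 : (m`!%:R : F) != 0 by rewrite pnatr_eq0 -lt0n fact_gt0.
rewrite -mulr_natr -hb.
field.
by rewrite f1 f2 pnatr_eq0 -lt0n bin_gt0 him.
Qed.

Lemma cf_binom (F : numFieldType) (z w : F) (m : nat) :
  \sum_(0 <= j < m.+1) cf z j * cf w (m - j)%N = cf (z + w) m - cf z m - cf w m.
Proof.

case: m => [|m]; first by rewrite big_nat1 /= mul0r !subr0.
rewrite big_nat_recl // big_nat_recr //= mul0r add0r subnn mulr0 addr0.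
have := cf_conv z w m.+1.
rewrite big_nat_recl // big_nat_recr //= subnn subn0 !expr0 !fact0 !divr1 mul1r mulr1.
move=> h.
rewrite -h.
have -> : \sum_(0 <= i < m) cf z i.+1 * cf w (m.+1 - i.+1)%N
  = \sum_(0 <= i < m) z ^+ i.+1 / (i.+1)`!%:R * (w ^+ (m.+1 - i.+1)%N / (m.+1 - i.+1)%N`!%:R).
  apply: eq_big_nat => i /andP [_ hi].
  by rewrite /cf subSS; case Esum: (m - i)%N => [|n] //; move: hi; rewrite -subn_gt0 Esum.
rewrite /cf.
set Ssum := \sum_(_ <= _ < _) _.
set a1 := w ^+ _ / _. set a2 := z ^+ _ / _.
ring.
Qed.

Lemma tri_sum (V : nmodType) (f : nat -> nat -> V) (K : nat) :
  \sum_(0 <= m < K) \sum_(0 <= j < m.+1) f j (m - j)%N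
  = \sum_(0 <= j < K) \sum_(0 <= l < (K - j)%N) f j l.
Proof.
elim: K => [|K IH]; first by rewrite !big_geq.
rewrite big_nat_recr // IH.
have -> : \sum_(0 <= j < K.+1) \sum_(0 <= l < (K.+1 - j)%N) f j l
   = \sum_(0 <= j < K.+1) (\sum_(0 <= l < (K - j)%N) f j l + f j (K - j)%N).
  by apply: eq_big_nat => j /andP [_ hj]; rewrite subSn // big_nat_recr.
rewrite big_split /=; congr (_ + _).
by rewrite [X in _ = X]big_nat_recr //= subnn [X in _ = _ + X]big_geq // addr0.
Qed.

Lemma square_split (V : nmodType) (f : nat -> nat -> V) (K : nat) :
  \sum_(0 <= j < K) \sum_(0 <= l < K) f j l
  = \sum_(0 <= j < K) \sum_(0 <= l < (K - j)%N) f j l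
    + \sum_(0 <= j < K) \sum_((K - j)%N <= l < K) f j l.
Proof.
rewrite -big_split /=; apply: eq_big_nat => j _.
by rewrite -big_cat_nat // leq_subr.
Qed.

Section Alg.
Variables (R : realType) (B : lmodType R[i]) (mul : B -> B -> B).
Hypothesis hm : assoc_bilinear mul.

Lemma mulA x y z : mul x (mul y z) = mul (mul x y) z. Proof. by case: hm. Qed.
Lemma mulDl x y z : mul (x + y) z = mul x z + mul y z. Proof. by case: hm. Qed.
Lemma mulDr x y z : mul x (y + z) = mul x y + mul x z. Proof. by case: hm. Qed.
Lemma mulZl c x y : mul (c *: x) y = c *: mul x y. Proof. by case: hm. Qed.
Lemma mulZr c x y : mul x (c *: y) = c *: mul x y. Proof. by case: hm. Qed.

Lemma mul0l y : mul 0 y = 0.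
Proof. by apply: (addrI (mul 0 y)); rewrite -mulDl !addr0. Qed.
Lemma bmul0r y : mul y 0 = 0.
Proof. by apply: (addrI (mul y 0)); rewrite -mulDr !addr0. Qed.
Lemma mulNl x y : mul (- x) y = - mul x y.
Proof. by apply: (addrI (mul x y)); rewrite -mulDl !subrr mul0l. Qed.
Lemma bmulNr x y : mul x (- y) = - mul x y.
Proof. by apply: (addrI (mul x y)); rewrite -mulDr !subrr bmul0r. Qed.
Lemma mulBl x y z : mul (x - y) z = mul x z - mul y z.
Proof. by rewrite mulDl mulNl. Qed.
Lemma mulBr x y z : mul x (y - z) = mul x y - mul x z.
Proof. by rewrite mulDr bmulNr. Qed.

Lemma mul_suml (I : Type) (r : seq I) (P : pred I) (F : I -> B) y :
  mul (\sum_(i <- r | P i) F i) y = \sum_(i <- r | P i) mul (F i) y.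
Proof. exact: (big_morph (fun x => mul x y) (fun a b => mulDl a b y) (mul0l y)). Qed.
Lemma mul_sumr (I : Type) (r : seq I) (P : pred I) (F : I -> B) y :
  mul y (\sum_(i <- r | P i) F i) = \sum_(i <- r | P i) mul y (F i).
Proof. exact: (big_morph (fun x => mul y x) (fun a b => mulDr y a b) (bmul0r y)). Qed.

Lemma npowS a n : npow mul a n.+2 = mul a (npow mul a n.+1). Proof. by []. Qed.

Lemma npowD a n m :
  mul (npow mul a n.+1) (npow mul a m.+1) = npow mul a (n + m).+2.
Proof.
elim: n => [|n IH] //.
by rewrite npowS -mulA IH addSn.
Qed.

Lemma npowZ c a n : npow mul (c *: a) n.+1 = c ^+ n.+1 *: npow mul a n.+1.
Proof.
elim: n => [|n IH]; first by rewrite expr1.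
by rewrite npowS IH mulZl mulZr scalerA -exprS.
Qed.

Lemma npow_comm a n : mul (npow mul a n.+1) a = mul a (npow mul a n.+1).
Proof.
have h1 := npowD a n 0; have h2 := npowD a 0 n.
by rewrite addn0 in h1; rewrite add0n in h2; rewrite h1 h2.
Qed.

Lemma npow_mul_gen a j l : (0 < j)%N -> (0 < l)%N ->
  mul (npow mul a j) (npow mul a l) = npow mul a (j + l).
Proof.
case: j => // j; case: l => // l _ _.
by rewrite npowD addSn addnS.
Qed.

Variable star : B -> B.
Hypothesis hs : is_involution mul star.

Lemma starD x y : star (x + y) = star x + star y. Proof. by case: hs. Qed.
Lemma starZ c x : star (c *: x) = conjc c *: star x. Proof. by case: hs. Qed.
Lemma starM x y : star (mul x y) = mul (star y) (star x). Proof. by case: hs. Qed.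
Lemma star0 : star 0 = 0.
Proof. by apply: (addrI (star 0)); rewrite -starD !addr0. Qed.
Lemma star_sum (I : Type) (r : seq I) (P : pred I) (F : I -> B) :
  star (\sum_(i <- r | P i) F i) = \sum_(i <- r | P i) star (F i).
Proof. exact: (big_morph star starD star0). Qed.

Lemma star_npow a n : star a = a -> star (npow mul a n) = npow mul a n.
Proof.
move=> ha; case: n => [|n] //; elim: n => [|n IH] //.
by rewrite npowS starM IH ha npow_comm.
Qed.

End Alg.

Lemma zmod6 (V : zmodType) (a b c d e f : V) :
  a - b - c - (d - e - f) = (a - d) - (b - e) - (c - f).
Proof.
rewrite !opprD !opprK !addrA.
by rewrite [a - b - c - d]addrAC [a - b - d]addrAC [a - d - b - c + e]addrAC.
Qed.

Lemma zmod3 (V : zmodType) (a b c d : V) : a - b - c = d -> a = b + c + d.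
Proof. by move=> <-; rewrite addrC !addrA [a - b - c + b]addrAC subrK subrK. Qed.

Lemma zmod_iter (V : zmodType) (a p w q r : V) :
  a + (p + w) + (q + r) = q + (a + p + w + r).
Proof. by rewrite addrCA !addrA. Qed.


Lemma normcN1 (R : rcfType) : ComplexField.Normc.normc (-1 : R[i]) = 1.
Proof. by rewrite normcN ComplexField.Normc.normc1. Qed.

Section Norm.
Set Default Proof Using "All".
Variables (R : realType) (B : lmodType R[i]) (A : set B) (nA : B -> R).
Hypothesis hA0 : A 0.
Hypothesis hAD : forall x y, A x -> A y -> A (x + y).
Hypothesis hAZ : forall (c : R[i]) x, A x -> A (c *: x).
Hypothesis hnorm : is_norm_on A nA.

Lemma AN x : A x -> A (- x).
Proof. by move=> h; rewrite -scaleN1r; apply: hAZ. Qed.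
Lemma AB x y : A x -> A y -> A (x - y).
Proof. by move=> hx hy; apply: hAD => //; apply: AN. Qed.
Lemma Asum (I : Type) (r : seq I) (P : pred I) (F : I -> B) :
  (forall i, A (F i)) -> A (\sum_(i <- r | P i) F i).
Proof. by move=> h; apply: big_ind => //; move=> x y; apply: hAD. Qed.

Lemma nA_ge0 x : A x -> 0 <= nA x. Proof. by case: hnorm => h _ _ _; apply: h. Qed.
Lemma nA_eq0 x : A x -> nA x = 0 -> x = 0. Proof. by case: hnorm => _ h _ _; apply: h. Qed.
Lemma nAD x y : A x -> A y -> nA (x + y) <= nA x + nA y.
Proof. by case: hnorm => _ _ h _; apply: h. Qed.
Lemma nAZ (c : R[i]) x : A x -> nA (c *: x) = ComplexField.Normc.normc c * nA x.
Proof. by case: hnorm => _ _ _ h; apply: h. Qed.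
Lemma nA0 : nA 0 = 0.
Proof. by rewrite -(scale0r (0 : B)) nAZ // ComplexField.Normc.normc0 mul0r. Qed.
Lemma nAN x : A x -> nA (- x) = nA x.
Proof. by move=> h; rewrite -scaleN1r nAZ // normcN1 mul1r. Qed.
Lemma nA_subC x y : A x -> A y -> nA (x - y) = nA (y - x).
Proof. by move=> hx hy; rewrite -nAN ?opprB //; apply: AB. Qed.
Lemma nA_sub_tri x y z : A x -> A y -> A z -> nA (x - z) <= nA (x - y) + nA (y - z).
Proof.
move=> hx hy hz; have -> : x - z = (x - y) + (y - z) by rewrite addrA subrK.
by apply: nAD; apply: AB.
Qed.

Lemma nA_sum (I : Type) (r : seq I) (P : pred I) (F : I -> B) :
  (forall i, A (F i)) -> nA (\sum_(i <- r | P i) F i) <= \sum_(i <- r | P i) nA (F i).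
Proof.
move=> h.
have := @big_ind2 B R (fun x y => A x /\ nA x <= y) 0 +%R 0 +%R.
move=> /(_ _ _ _ r P F (fun i => nA (F i))) [] //.
- by rewrite nA0.
- move=> x1 x2 y1 y2 [h1 h2] [h3 h4]; split; first exact: hAD.
  by apply: le_trans (nAD h1 h3) _; apply: lerD.
Qed.

Lemma near_oo_ex (P : nat -> Prop) :
  (\forall n \near \oo, P n) <-> exists N, forall n, (N <= n)%N -> P n.
Proof.
split; first by case=> N _ H; exists N => n hn; exact: H.
by case=> N H; exists N.
Qed.

Lemma cvg_in_bound (s : nat -> B) x (b : nat -> R) :
  (forall n, nA (s n - x) <= b n) -> b n @[n --> \oo] --> 0 -> cvg_in nA s x.
Proof.
move=> hb /cvgrPdist_le hc e e0.
have [N hN'] := (near_oo_ex _).1 (hc e e0).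
exists N => m hm; apply: le_trans (hb m) _.
by apply: le_trans (hN' m hm); rewrite sub0r normrN ler_norm.
Qed.

Lemma cvg_in_real (s : nat -> B) x :
  (forall n, A (s n)) -> A x -> cvg_in nA s x ->
  nA (s n - x) @[n --> \oo] --> 0.
Proof.
move=> hs hx hc; apply/cvgrPdist_le => e e0.
apply/near_oo_ex; have [N hN'] := hc e e0; exists N => n hn'.
by rewrite sub0r normrN ger0_norm ?hN' //; apply: nA_ge0; apply: AB.
Qed.

Lemma lim_unique (s : nat -> B) x y :
  (forall n, A (s n)) -> A x -> A y -> cvg_in nA s x -> cvg_in nA s y -> x = y.
Proof.
move=> hs hx hy cx cy; apply/eqP; rewrite -subr_eq0; apply/eqP.
apply: nA_eq0; first exact: AB.
apply/eqP; rewrite eq_le nA_ge0 ?andbT; last exact: AB.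
apply/ler_addgt0Pr => e e0; rewrite add0r.
have e20 : 0 < e / 2 by rewrite divr_gt0.
have [N1 h1] := cx _ e20; have [N2 h2] := cy _ e20.
set n := maxn N1 N2.
apply: le_trans (nA_sub_tri hx (hs n) hy) _.
rewrite nA_subC //; apply: le_trans (lerD (h1 n _) (h2 n _)) _.
- by rewrite leq_maxl.
- by rewrite leq_maxr.
- by rewrite -splitr.
Qed.

Lemma cvg_in_shift (s : nat -> B) x k : cvg_in nA s x <-> cvg_in nA (fun n => s (n + k)%N) x.
Proof.
split => h e e0; have [N hN'] := h e e0.
  by exists N => m hm; apply: hN'; apply: leq_trans hm (leq_addr _ _).
exists (N + k)%N => m hm; have := hN' (m - k)%N.
have hkm : (k <= m)%N by lia.
rewrite subnK // => H; apply: H; lia.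
Qed.

End Norm.


Notation nc := (@ComplexField.Normc.normc _).

Lemma ncX (R : rcfType) (z : R[i]) n : nc (z ^+ n) = nc z ^+ n.
Proof.
elim: n => [|n IH]; first by rewrite !expr0 ComplexField.Normc.normc1.
by rewrite !exprS ComplexField.Normc.normcM IH.
Qed.

Lemma ncn (R : rcfType) n : nc (n%:R : R[i]) = n%:R.
Proof. by rewrite normcMn ComplexField.Normc.normc1. Qed.

Lemma nc_cf (R : rcfType) (z : R[i]) j : nc (cf z j) = cf (nc z) j.
Proof.
case: j => [|j] /=; first exact: ComplexField.Normc.normc0.
by rewrite ComplexField.Normc.normcM ComplexField.Normc.normcV ncX ncn.
Qed.

Lemma nc_ge0 (R : rcfType) (z : R[i]) : 0 <= nc z.
Proof. by case: z => a b /=; apply: sqrtr_ge0. Qed.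

Lemma cf_ge0 (R : realFieldType) (x : R) j : 0 <= x -> 0 <= cf x j.
Proof. by case: j => //= j hx; rewrite divr_ge0 ?exprn_ge0. Qed.

Lemma cf0 (F : fieldType) (z : F) : cf z 0 = 0. Proof. by []. Qed.
Lemma cf_zero (F : fieldType) j : cf (0 : F) j = 0.
Proof. by case: j => //= j; rewrite expr0n /= mul0r. Qed.

Definition Esum (R : realType) (K : nat) (x : R) := \sum_(0 <= j < K) cf x j.

Lemma E_series (R : realType) (x : R) K : Esum K.+1 x = series (exp_coeff x) K.+1 - 1.
Proof.
have eh : forall n, exp_coeff x n = n`!%:R^-1 * x ^+ n by move=> n; rewrite exp_coeffE.
rewrite /Esum /series /= !big_nat_recl //= eh expr0 fact0 invr1 mulr1 add0r.
rewrite addrC addKr; apply: eq_big_nat => j _.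
by rewrite eh /= mulrC.
Qed.

Lemma E_cvg (R : realType) (x : R) : Esum n x @[n --> \oo] --> expR x - 1.
Proof.
rewrite -cvg_shiftS /=.
have -> : (fun n => Esum n.+1 x) = (fun n => series (exp_coeff x) n.+1 - 1).
  by apply: funext => n; rewrite E_series.
apply: cvgB; last exact: cvg_cst.
rewrite cvg_shiftS /expR; exact: is_cvg_series_exp_coeff.
Qed.

Lemma E_mono (R : realType) (x : R) K K' : 0 <= x -> (K <= K')%N -> Esum K x <= Esum K' x.
Proof.
move=> hx hK; rewrite /Esum (big_cat_nat (leq0n K) hK) /= lerDl.
by apply: sumr_ge0 => j _; apply: cf_ge0.
Qed.

Lemma E_le (R : realType) (x : R) K : 0 <= x -> Esum K x <= expR x - 1.
Proof.
move=> hx; case: K => [|K].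
  by rewrite /Esum big_geq // subr_ge0; apply: le_trans (expR_ge1Dx x); rewrite lerDl.
rewrite E_series lerB // /expR; apply: nondecreasing_cvgn_le.
- move=> n m hnm; rewrite /series /= (big_cat_nat (leq0n n) hnm) /= lerDl.
  by apply: sumr_ge0 => j _; apply: exp_coeff_ge0.
- exact: is_cvg_series_exp_coeff.
Qed.

Lemma E_ge0 (R : realType) (x : R) K : 0 <= x -> 0 <= Esum K x.
Proof. by move=> hx; apply: sumr_ge0 => j _; apply: cf_ge0. Qed.

Section Exp.
Set Default Proof Using "All".
Variables (R : realType) (B : lmodType R[i]) (mul : B -> B -> B).
Hypothesis hm : assoc_bilinear mul.
Variables (A : set B) (nA : B -> R).
Hypothesis hA0 : A 0.
Hypothesis hAD : forall x y, A x -> A y -> A (x + y).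
Hypothesis hAZ : forall (c : R[i]) x, A x -> A (c *: x).
Hypothesis hAM : forall x y, A x -> A y -> A (mul x y).
Hypothesis hnorm : is_norm_on A nA.
Hypothesis hsub : forall x y, A x -> A y -> nA (mul x y) <= nA x * nA y.
Hypothesis hcomp : complete_in A nA.
Variable a : B.
Hypothesis ha : A a.

Let AB' := AB hA0 hAD hAZ hnorm.
Let Asum' := Asum hA0 hAD hAZ hnorm.
Let nAD' := nAD hA0 hAD hAZ hnorm.
Let nAZ' := nAZ hA0 hAD hAZ hnorm.
Let nA0' := nA0 hA0 hAD hAZ hnorm.
Let nA_ge0' := nA_ge0 hA0 hAD hAZ hnorm.
Let nA_subC' := nA_subC hA0 hAD hAZ hnorm.
Let nA_sum' := nA_sum hA0 hAD hAZ hnorm.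
Let lim_unique' := lim_unique hA0 hAD hAZ hnorm.
Let cvg_in_bound' := cvg_in_bound hA0 hAD hAZ hnorm.
Let AN' := AN hA0 hAD hAZ hnorm.
Let nAN' := nAN hA0 hAD hAZ hnorm.

Definition pw j := npow mul a j.
Definition Ssum K (z : R[i]) := \sum_(0 <= j < K) cf z j *: pw j.
Definition al := nA a.

Lemma al_ge0 : 0 <= al. Proof. exact: nA_ge0' ha. Qed.

Lemma A_pw j : A (pw j).
Proof. case: j => [|j] //; elim: j => [|j IH] //; exact: hAM. Qed.

Lemma nA_pw j : nA (pw j.+1) <= al ^+ j.+1.
Proof.
elim: j => [|j IH]; first by rewrite expr1.
rewrite /pw npowS exprS; apply: le_trans (hsub ha (A_pw j.+1)) _.
by apply: ler_wpM2l; [exact: al_ge0 | exact: IH].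
Qed.

Lemma A_S K z : A (Ssum K z).
Proof. by apply: Asum' => j; apply: hAZ; apply: A_pw. Qed.

Lemma term_bound z j : nA (cf z j *: pw j) <= cf (nc z * al) j.
Proof.
rewrite nAZ'; last exact: A_pw.
case: j => [|j]; first by rewrite cf0; rewrite ComplexField.Normc.normc0 mul0r.
rewrite nc_cf /= exprMn [X in _ <= X]mulrAC; apply: ler_wpM2l.
  by rewrite divr_ge0 ?exprn_ge0 ?nc_ge0.
exact: nA_pw.
Qed.

Lemma S_diff z K K' : (K <= K')%N ->
  nA (Ssum K' z - Ssum K z) <= Esum K' (nc z * al) - Esum K (nc z * al).
Proof.
have h (V : zmodType) (x y : V) : x + y - x = y by rewrite addrC addKr.
move=> hK; rewrite /Ssum /Esum !(big_cat_nat (leq0n K) hK) /= !h.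
apply: le_trans (nA_sum' _ _ _) _.
  by move=> j; apply: hAZ; apply: A_pw.
by apply: ler_sum => j _; apply: term_bound.
Qed.

Lemma S0 z : Ssum 0 z = 0. Proof. by rewrite /Ssum big_geq. Qed.

Lemma S_bound z K : nA (Ssum K z) <= Esum K (nc z * al).
Proof.
have := S_diff z (leq0n K); rewrite S0 /Esum [X in _ <= _ - X]big_geq // !subr0.
by [].
Qed.

Lemma S_cauchy z : cauchy_in nA (fun K => Ssum K z).
Proof.
move=> e e0; set x := nc z * al.
have hx : 0 <= x by rewrite mulr_ge0 ?nc_ge0 ?al_ge0.
have /cvgrPdist_le := @E_cvg _ x => /(_ (e / 2)) [].
  by rewrite divr_gt0.
move=> N _ hN; exists N => m m' hm1 hm2.
have key : forall n n', (N <= n)%N -> (N <= n')%N -> (n <= n')%N ->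
    nA (Ssum n' z - Ssum n z) <= e.
  move=> n n' hn hn' hnn; apply: le_trans (S_diff z hnn) _.
  have h1 := hN n hn; have h2 := hN n' hn'.
  rewrite !ler_norml in h1 h2; case/andP: h1 => h1 h1'; case/andP: h2 => h2 h2'.
  lra.
case: (leqP m m') => hmm.
  by rewrite (nA_subC' (A_S m z) (A_S m' z)); apply: key.
by apply: key => //; apply: ltnW.
Qed.

Definition U z := xget 0 [set x | A x /\ cvg_in nA (fun K => Ssum K z) x].

Lemma U_spec z : A (U z) /\ cvg_in nA (fun K => Ssum K z) (U z).
Proof.
rewrite /U; apply: (@xgetPex _ 0 [set x | A x /\ cvg_in nA (fun K => Ssum K z) x]).
have [x hx hc] := hcomp (fun K => A_S K z) (S_cauchy z).
by exists x.
Qed.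

Lemma U_A z : A (U z). Proof. by case: (U_spec z). Qed.
Lemma U_cvg z : cvg_in nA (fun K => Ssum K z) (U z). Proof. by case: (U_spec z). Qed.

Lemma U_eq z x : A x -> cvg_in nA (fun K => Ssum K z) x -> U z = x.
Proof.
move=> hx hc; apply: (lim_unique' (fun K => A_S K z)) => //.
- exact: U_A.
- exact: U_cvg.
Qed.

Lemma U_bound z : nA (U z) <= expR (nc z * al) - 1.
Proof.
set x := nc z * al.
have hx : 0 <= x by rewrite mulr_ge0 ?nc_ge0 ?al_ge0.
apply/ler_addgt0Pr => e e0.
have [N hN] := U_cvg z e0.
have h1 := S_bound z N.
have h2 := @E_le _ x N hx.
have h3 : nA (U z) <= nA (Ssum N z) + nA (U z - Ssum N z).
  by rewrite -{1}(subrK (Ssum N z) (U z)) addrC; apply: nAD'; [exact: A_S | apply: AB'; [exact: U_A | exact: A_S]].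
rewrite nA_subC' in h3; [|exact: U_A|exact: A_S].
have := hN N (leqnn N); lra.
Qed.


Lemma term_bound' z j : nc (cf z j) * nA (pw j) <= cf (nc z * al) j.
Proof. by rewrite -nAZ'; [exact: term_bound | exact: A_pw]. Qed.

Lemma S_zero K : Ssum K 0 = 0.
Proof. by rewrite /Ssum big1 // => j _; rewrite cf_zero scale0r. Qed.

Lemma U_zero : U 0 = 0.
Proof.
apply: U_eq => // e e0; exists 0%N => m _.
by rewrite S_zero subrr nA0'; apply: ltW.
Qed.

Lemma nA_cvg_real (s : nat -> B) x :
  (forall n, A (s n)) -> A x -> cvg_in nA s x -> nA (s n - x) @[n --> \oo] --> 0.
Proof. exact: (cvg_in_real hA0 hAD hAZ hnorm). Qed.

Lemma S_U_real z : nA (Ssum n z - U z) @[n --> \oo] --> 0.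
Proof. apply: nA_cvg_real; [by move=> n; apply: A_S | exact: U_A | exact: U_cvg]. Qed.

Lemma nA_mul_le x y : A x -> A y -> nA (mul x y) <= nA x * nA y.
Proof. exact: hsub. Qed.

Lemma S_mul_cvg z w : cvg_in nA (fun K => mul (Ssum K z) (Ssum K w)) (mul (U z) (U w)).
Proof.
set xw := nc w * al.
have hxw : 0 <= xw by rewrite mulr_ge0 ?nc_ge0 ?al_ge0.
apply: (@cvg_in_bound' _ _
   (fun K => nA (Ssum K z - U z) * expR xw + nA (U z) * nA (Ssum K w - U w))).
  move=> K.
  have e1 : mul (Ssum K z) (Ssum K w) - mul (U z) (U w)
     = mul (Ssum K z - U z) (Ssum K w) + mul (U z) (Ssum K w - U w).
    by rewrite (mulBl hm) (mulBr hm) addrA subrK.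
  have hSz := A_S K z; have hSw := A_S K w; have hUz := U_A z; have hUw := U_A w.
  rewrite e1; apply: le_trans (nAD' _ _) _; [by apply: hAM => //; apply: AB'|by apply: hAM => //; apply: AB'|].
  apply: lerD.
    apply: le_trans (hsub (AB' hSz hUz) hSw) _; apply: ler_wpM2l; first exact: nA_ge0' (AB' hSz hUz).
    apply: le_trans (S_bound w K) _; apply: le_trans (@E_le _ xw K hxw) _; lra.
  exact: hsub hUz (AB' hSw hUw).
have -> : (0 : R) = 0 * expR xw + nA (U z) * 0 by rewrite mul0r mulr0 addr0.
apply: cvgD; [apply: cvgMr_tmp; exact: S_U_real | apply: cvgMl_tmp; exact: S_U_real].
Qed.

Definition Tail K z w := \sum_(0 <= j < K) \sum_((K - j)%N <= l < K)
   (cf z j * cf w l) *: mul (pw j) (pw l).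
Definition TR K (x y : R) := \sum_(0 <= j < K) \sum_((K - j)%N <= l < K) cf x j * cf y l.

Lemma pw_mul_cf z w m j : (j <= m)%N ->
  (cf z j * cf w (m - j)%N) *: mul (pw j) (pw (m - j)%N) = (cf z j * cf w (m - j)%N) *: pw m.
Proof.
move=> hjm; case: j hjm => [|j] hjm; first by rewrite cf0 mul0r !scale0r.
case Esum: (m - j.+1)%N => [|l]; first by rewrite cf0 mulr0 !scale0r.
by rewrite /pw (npow_mul_gen hm) // -Esum subnKC.
Qed.

Lemma D_identity K z w :
  Ssum K (z + w) - Ssum K z - Ssum K w = mul (Ssum K z) (Ssum K w) - Tail K z w.
Proof.
apply/eqP; rewrite eq_sym subr_eq; apply/eqP.
rewrite /Ssum (mul_suml hm).
under eq_bigr => j _ do rewrite (mul_sumr hm).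
under eq_bigr => j _ do under eq_bigr => l _ do rewrite (mulZl hm) (mulZr hm) scalerA.
rewrite (square_split (fun j l => (cf z j * cf w l) *: mul (pw j) (pw l))) /Tail; congr (_ + _).
rewrite -tri_sum.
rewrite -!sumrB; apply: eq_big_nat => m _.
rewrite -!scalerBl -cf_binom scaler_suml; apply: eq_big_nat => j /andP [_ hj].
by apply: pw_mul_cf.
Qed.

Lemma TR_identity K x y :
  TR K x y = Esum K x * Esum K y - (Esum K (x + y) - Esum K x - Esum K y).
Proof.
apply/eqP; rewrite eq_sym subr_eq; apply/eqP.
rewrite /Esum mulr_suml.
under eq_bigr => j _ do rewrite mulr_sumr.
rewrite (square_split (fun j l => cf x j * cf y l)) /TR addrC; congr (_ + _).
rewrite -tri_sum -!sumrB; apply: eq_big_nat => m _.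
by rewrite cf_binom.
Qed.

Lemma TR_cvg x y : TR n x y @[n --> \oo] --> 0.
Proof.
have -> : (fun n => TR n x y) = (fun n => Esum n x * Esum n y - (Esum n (x + y) - Esum n x - Esum n y)).
  by apply: funext => n; rewrite TR_identity.
have -> : (0 : R) = (expR x - 1) * (expR y - 1) - ((expR (x + y) - 1) - (expR x - 1) - (expR y - 1)).
  rewrite expRD; ring.
apply: cvgB; first by apply: cvgM; apply: E_cvg.
by apply: cvgB; [apply: cvgB|]; apply: E_cvg.
Qed.

Lemma Tail_bound K z w : nA (Tail K z w) <= TR K (nc z * al) (nc w * al).
Proof.
have hA : forall j l, A ((cf z j * cf w l) *: mul (pw j) (pw l)).
  by move=> j l; apply: hAZ; apply: hAM; apply: A_pw.
apply: le_trans (nA_sum' _ _ _) _.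
  by move=> j; apply: Asum' => l.
apply: ler_sum => j _; apply: le_trans (nA_sum' _ _ _) _ => //.
apply: ler_sum => l _; rewrite nAZ'; last by apply: hAM; apply: A_pw.
rewrite ComplexField.Normc.normcM.
apply: (@le_trans _ _ (nc (cf z j) * nc (cf w l) * (nA (pw j) * nA (pw l)))).
  apply: ler_wpM2l; first by rewrite mulr_ge0 ?nc_ge0.
  by apply: hsub; apply: A_pw.
rewrite mulrACA; apply: ler_pM.
- by rewrite mulr_ge0 ?nc_ge0 // nA_ge0' //; apply: A_pw.
- by rewrite mulr_ge0 ?nc_ge0 // nA_ge0' //; apply: A_pw.
- exact: term_bound'.
- exact: term_bound'.
Qed.

Lemma U_add z w : U (z + w) = U z + U w + mul (U z) (U w).
Proof.
have hUz := U_A z; have hUw := U_A w; have hUzw := U_A (z + w).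
set D := fun K => Ssum K (z + w) - Ssum K z - Ssum K w.
have hD : forall K, A (D K) by move=> K; rewrite /D; apply: AB'; [apply: AB'|]; apply: A_S.
have hT : forall K, A (Tail K z w).
  move=> K; apply: Asum' => j; apply: Asum' => l; apply: hAZ; apply: hAM; apply: A_pw.
have c1 : cvg_in nA D (U (z + w) - U z - U w).
  apply: (@cvg_in_bound' _ _
    (fun K => nA (Ssum K (z + w) - U (z + w)) + nA (Ssum K z - U z) + nA (Ssum K w - U w))).
    move=> K; rewrite /D.
    have -> : Ssum K (z + w) - Ssum K z - Ssum K w - (U (z + w) - U z - U w)
      = (Ssum K (z + w) - U (z + w)) - (Ssum K z - U z) - (Ssum K w - U w).
      exact: zmod6.
    have a1 := AB' (A_S K (z + w)) hUzw; have a2 := AB' (A_S K z) hUz; have a3 := AB' (A_S K w) hUw.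
    apply: le_trans (nAD' (AB' a1 a2) (AN' a3)) _.
    rewrite nAN' //.
    apply: lerD => //; apply: le_trans (nAD' a1 (AN' a2)) _.
    by rewrite nAN'.
  have -> : (0 : R) = 0 + 0 + 0 by rewrite !addr0.
  by apply: cvgD; [apply: cvgD|]; apply: S_U_real.
have c2 : cvg_in nA D (mul (U z) (U w)).
  apply: (@cvg_in_bound' _ _
    (fun K => nA (mul (Ssum K z) (Ssum K w) - mul (U z) (U w)) + TR K (nc z * al) (nc w * al))).
    move=> K; rewrite /D D_identity.
    have hP : A (mul (Ssum K z) (Ssum K w) - mul (U z) (U w)) by apply: AB'; apply: hAM => //; apply: A_S.
    have -> : mul (Ssum K z) (Ssum K w) - Tail K z w - mul (U z) (U w)
       = (mul (Ssum K z) (Ssum K w) - mul (U z) (U w)) - Tail K z w.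
      by rewrite addrAC.
    apply: le_trans (nAD' hP (AN' (hT K))) _.
    rewrite nAN' //; apply: lerD => //; exact: Tail_bound.
  have -> : (0 : R) = 0 + 0 by rewrite addr0.
  apply: cvgD; last exact: TR_cvg.
  apply: nA_cvg_real; [|apply: hAM => //|exact: S_mul_cvg].
  by move=> n; apply: hAM; apply: A_S.
have := lim_unique' hD (AB' (AB' hUzw hUz) hUw) (hAM hUz hUw) c1 c2.
exact: zmod3.
Qed.

Lemma A_npow x n : A x -> A (npow mul x n).
Proof. move=> hx; case: n => [|n] //; elim: n => [|n IH] //; exact: hAM. Qed.

Lemma nA_npow x n : A x -> nA (npow mul x n.+1) <= nA x ^+ n.+1.
Proof.
move=> hx; elim: n => [|n IH]; first by rewrite expr1.
rewrite npowS exprS; apply: le_trans (hsub hx (A_npow n.+1 hx)) _.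
by apply: ler_wpM2l; [exact: nA_ge0' | exact: IH].
Qed.

Lemma U_iter z m : exists w, [/\ A w,
  U (z *+ m.+1) = npow mul (U z) m.+1 + w &
  nA w <= 4 ^+ m.+1 * (Num.max 1 (nA (U z))) ^+ m].
Proof.
set v := U z; set g := Num.max 1 (nA v).
have hv : A v := U_A z.
have hf0 : 0 <= nA v := nA_ge0' hv.
have hg1 : 1 <= g by rewrite le_max lexx.
have hfg : nA v <= g by rewrite le_max lexx orbT.
elim: m => [|m [w [hw he hb]]].
  exists 0; split => //; first by rewrite mulr1n addr0.
  by rewrite nA0' expr0 mulr1 expr1; lra.
exists (v + npow mul v m.+1 + w + mul v w); split.
- by apply: hAD; [apply: hAD; [apply: hAD => //; apply: A_npow|]|apply: hAM].
- rewrite mulrS U_add he -/v (mulDr hm) npowS.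
  exact: zmod_iter.
- have hP := A_npow m.+1 hv.
  have h1 := nAD' (hAD (hAD hv hP) hw) (hAM hv hw).
  have h2 := nAD' (hAD hv hP) hw.
  have h3 := nAD' hv hP.
  have h4 := hsub hv hw.
  have h5 := nA_npow m hv.
  have hW0 := nA_ge0' hw.
  set X := g ^+ m in hb *; set F := (4 : R) ^+ m.+1 in hb *.
  have hX1 : 1 <= X by apply: exprn_ege1.
  have hF1 : 1 <= F by apply: exprn_ege1; lra.
  have hfm : nA v ^+ m.+1 <= g * X.
    rewrite exprS; apply: ler_pM; [exact: hf0 | exact: exprn_ge0 hf0 | exact: hfg |].
    by rewrite lerXn2r ?nnegrE //; lra.
  have hgX : g <= g * X by rewrite ler_peMr //; lra.
  have hfW : nA v * nA w <= g * (F * X) by apply: ler_pM.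
  have hFgX : g * X <= F * (g * X) by rewrite ler_peMl //; rewrite mulr_ge0 //; lra.
  have hFX : F * X <= F * (g * X).
    by rewrite ler_wpM2l //; [lra | rewrite ler_peMl //; lra].
  rewrite exprS [g ^+ m.+1]exprS -/X -/F.
  have -> : 4 * F * (g * X) = 4 * (F * (g * X)) by rewrite mulrA.
  have e : g * (F * X) = F * (g * X) by rewrite mulrCA.
  lra.
Qed.

Variable star : B -> B.
Hypothesis hinv : is_involution mul star.
Hypothesis hAs : forall x, A x -> A (star x).
Hypothesis hcont : forall x, A x -> forall e : R, 0 < e -> exists2 d : R, 0 < d &
         forall y, A y -> nA (y - x) < d -> nA (star y - star x) < e.
Hypothesis hsa : star a = a.

Lemma conj_cf (z : R[i]) j : conjc (cf z j) = cf (conjc z) j.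
Proof.
case: j => [|j]; first exact: conjc0.
by rewrite /= rmorphM rmorphXn fmorphV rmorph_nat.
Qed.

Lemma S_star K z : star (Ssum K z) = Ssum K (conjc z).
Proof.
rewrite /Ssum (star_sum hinv); apply: eq_bigr => j _.
by rewrite (starZ hinv) /pw (star_npow hm hinv) // conj_cf.
Qed.

Lemma cvg_star (s : nat -> B) x : (forall n, A (s n)) -> A x -> cvg_in nA s x ->
  cvg_in nA (fun n => star (s n)) (star x).
Proof.
move=> hs hx hc e e0.
have [d d0 hd] := hcont hx e0.
have d20 : 0 < d / 2 by rewrite divr_gt0.
have [N hN] := hc _ d20.
exists N => m hmN; apply: ltW; apply: hd => //.
apply: le_lt_trans (hN m hmN) _; rewrite ltr_pdivrMr //; lra.
Qed.

Lemma U_star z : star (U z) = U (conjc z).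
Proof.
symmetry; apply: U_eq; first exact: hAs (U_A z).
have -> : (fun K => Ssum K (conjc z)) = (fun K => star (Ssum K z)).
  by apply: funext => K; rewrite S_star.
apply: cvg_star; [by move=> n; apply: A_S | exact: U_A | exact: U_cvg].
Qed.

Variable nB : B -> R.
Hypothesis hnB : is_norm_on setT nB.
Hypothesis hBsub : forall x y, nB (mul x y) <= nB x * nB y.
Hypothesis hCs : forall x, nB (mul (star x) x) = nB x ^+ 2.

Lemma nB_ge0 x : 0 <= nB x. Proof. by case: hnB => h _ _ _; apply: h. Qed.

Lemma nB_star_le x : nB x <= nB (star x).
Proof.
have h := hBsub (star x) x; rewrite hCs expr2 in h.
have h0 := nB_ge0 x; have h1 := nB_ge0 (star x).
case: (ltrP 0 (nB x)) => hx; last lra.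
by rewrite -(ler_pM2r hx).
Qed.

Lemma nB_star x : nB (star x) = nB x.
Proof.
apply/eqP; rewrite eq_le nB_star_le andbT.
have := nB_star_le (star x).
by case: hinv => _ _ -> _.
Qed.

Lemma unitary_bound t : nB (U ('i%C * (t%:C)%C)) <= 2.
Proof.
set z := 'i%C * (t%:C)%C; set v := U z.
have hc : conjc z = - z.
  by apply/eqP; rewrite eq_complex /= !mul0r mul1r subrr oppr0 !eqxx.
have hsv : star v = U (- z) by rewrite /v U_star hc.
have := U_add (- z) z; rewrite addNr U_zero -hsv -/v => h0.
have hm0 : mul (star v) v = - (star v + v).
  by apply/eqP; rewrite -addr_eq0 addrC -h0.
have h := hCs v; rewrite hm0 -scaleN1r in h.
case: hnB => hge _ htri hsc.
rewrite hsc // normcN1 mul1r in h.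
have := htri (star v) v I I; rewrite h nB_star => h1.
have := nB_ge0 v => h2.
nra.
Qed.

Lemma nc_it (t : R) : nc ('i%C * (t%:C)%C) = `|t|.
Proof.
rewrite ComplexField.Normc.normcM /=.
by rewrite !expr0n /= !addr0 add0r expr1n sqrtr1 mul1r sqrtr_sqr.
Qed.

Lemma u_eq t : u mul A nA ((t%:C)%C *: a) = U ('i%C * (t%:C)%C).
Proof.
set z := 'i%C * (t%:C)%C.
have hp : forall n, u_partial mul ((t%:C)%C *: a) n = Ssum n.+1 z.
  move=> n; rewrite /u_partial /Ssum big_nat_recl // cf0 scale0r add0r.
  apply: eq_big_nat => j _; rewrite (npowZ hm) scalerA /z /= exprMn.
  by rewrite mulrAC.
have hpA : forall n, A (u_partial mul ((t%:C)%C *: a) n) by move=> n; rewrite hp; apply: A_S.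
have hc : cvg_in nA (u_partial mul ((t%:C)%C *: a)) (U z).
  have -> : u_partial mul ((t%:C)%C *: a) = (fun n => Ssum (n + 1)%N z).
    by apply: funext => n; rewrite hp addn1.
  exact: ((cvg_in_shift hA0 hAD hAZ hnorm (fun n => Ssum n z) (U z) 1).1 (U_cvg z)).
rewrite /u.
have := @xgetPex _ 0 [set x | A x /\ cvg_in nA (u_partial mul ((t%:C)%C *: a)) x].
case; first by exists (U z); split => //; exact: U_A.
move=> hx hcx.
exact: (lim_unique' hpA hx (U_A z) hcx hc).
Qed.

Variables (k : nat) (p q C : R).
Hypothesis hk : (2 <= k)%N.
Hypothesis hp : 0 < p.
Hypothesis hq : 0 < q.
Hypothesis hC : 0 < C.
Hypothesis hdiff : forall x, A x ->
  nA (npow mul x k) <= C * (nA x `^ p) * (nB x `^ q).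

Definition gg (t : R) := Num.max 1 (nA (U ('i%C * (t%:C)%C))).

Lemma gg_ge1 t : 1 <= gg t.
Proof. by rewrite le_max lexx. Qed.

Lemma gg_base t : gg t <= expR (`|t| * al).
Proof.
have h := U_bound ('i%C * (t%:C)%C); rewrite nc_it in h.
have h1 := expR_ge1Dx (`|t| * al).
have h2 : 0 <= `|t| * al by rewrite mulr_ge0 ?al_ge0.
rewrite ge_max; apply/andP; split; lra.
Qed.

Lemma gg_step t :
  gg (k%:R * t) <= (C * 2 `^ q + 4 ^+ k) * gg t `^ (Num.max (k%:R - 1) p).
Proof.
set z := 'i%C * (t%:C)%C; set r := Num.max (k%:R - 1) p.
have ez : 'i%C * (((k%:R * t)%:C)%C) = z *+ k.
  by rewrite rmorphM rmorph_nat mulrCA mulr_natl.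
have [k' ek] : exists k', k = k'.+1 by exists k.-1; rewrite prednK // (leq_trans _ hk).
have [w [hw he hb]] := U_iter z k'.
set g := gg t.
have hUz : A (U z) := U_A z.
have hf0 : 0 <= nA (U z) := nA_ge0' hUz.
have hg1 : 1 <= g := gg_ge1 t.
have hfg : nA (U z) <= g by rewrite /g /gg le_max lexx orbT.
have hpr : p <= r by rewrite le_max lexx orbT.
have hkr : k'%:R <= r by rewrite le_max ek -natr1 addrK lexx.
have hb2 : nA w <= 4 ^+ k'.+1 * g ^+ k' by exact: hb.
clearbody g r.
have hfp : nA (U z) `^ p <= g `^ r.
  apply: le_trans (ler_powR hg1 hpr).
  apply: ge0_ler_powR; rewrite ?nnegrE //; [exact: ltW hp | exact: le_trans ler01 hg1].
have hB := unitary_bound t.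
have hBq : nB (U z) `^ q <= 2 `^ q.
  apply: ge0_ler_powR; rewrite ?nnegrE ?nB_ge0 //; exact: ltW hq.
have hgk : g ^+ k' <= g `^ r.
  by rewrite -powR_mulrn; [apply: ler_powR | lra].
have hgr1 : 1 <= g `^ r.
  by rewrite -(powRr0 g); apply: ler_powR => //; exact: le_trans (ltW hp) hpr.
have h4 : 1 <= (4 : R) ^+ k by apply: exprn_ege1; lra.
have hpos1 := powR_ge0 (nA (U z)) p; have hpos2 := powR_ge0 (nB (U z)) q.
have hpos3 := powR_ge0 2 q.
have hd := hdiff hUz.
have hprod : C * nA (U z) `^ p * nB (U z) `^ q <= C * g `^ r * 2 `^ q.
  apply: ler_pM => //; first by rewrite mulr_ge0 // ltW.
  by apply: ler_wpM2l => //; exact: ltW.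
have hmain : nA (U (z *+ k)) <= (C * 2 `^ q + 4 ^+ k) * g `^ r.
  rewrite ek he; apply: le_trans (nAD' (A_npow _ hUz) hw) _.
  rewrite -ek; have := hb2; rewrite -ek => hb'.
  have h5 : 4 ^+ k * g ^+ k' <= 4 ^+ k * g `^ r by apply: ler_wpM2l => //; apply: le_trans ler01 h4.
  have e1 : (C * 2 `^ q + 4 ^+ k) * g `^ r = C * g `^ r * 2 `^ q + 4 ^+ k * g `^ r.
    by rewrite mulrDl mulrAC.
  rewrite e1; lra.
have -> : gg (k%:R * t) = Num.max 1 (nA (U (z *+ k))).
  by rewrite /gg; congr (Num.max 1 (nA (U _))); exact: ez.
rewrite ge_max; apply/andP; split; last exact: hmain.
have hC2 : 0 <= C * 2 `^ q by rewrite mulr_ge0 // ltW.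
by apply: mulr_ege1 => //; apply: ler_wpDl.
Qed.

End Exp.


Lemma final_ineq (R : realType) (s tau a0 b0 : R) :
  0 <= s -> s < tau -> 0 <= a0 -> 0 <= b0 ->
  exists T, 1 <= T /\ forall x, T <= x -> a0 * x `^ s + b0 * ln x * x `^ s <= x `^ tau.
Proof.
move=> hs hst ha hb.
set e := (tau - s) / 2.
have he : 0 < e by rewrite /e divr_gt0 // subr_gt0.
set M := Num.max 1 (Num.max (2 * a0) (2 * b0 / e)).
have hM1 : 1 <= M by rewrite le_max lexx.
have hMa : 2 * a0 <= M by rewrite /M le_max (le_max (2 * a0)) lexx !orbT.
have hMb : 2 * b0 / e <= M by rewrite /M le_max (le_max (2 * b0 / e)) lexx !orbT.
exists (Num.max 1 (M `^ e^-1)); split; first by rewrite le_max lexx.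
move=> x hx.
have hx1 : 1 <= x by apply: le_trans hx; rewrite le_max lexx.
have hx0 : 0 < x by apply: lt_le_trans hx1; exact: ltr01.
have hy : M <= x `^ e.
  have -> : M = (M `^ e^-1) `^ e.
    by rewrite -powRrM mulVf ?gt_eqF // powRr1 //; apply: le_trans hM1; exact: ler01.
  apply: ge0_ler_powR; rewrite ?nnegrE ?powR_ge0 //; first exact: ltW.
    by apply: ltW.
  by apply: le_trans hx; rewrite le_max lexx orbT.
set y := x `^ e in hy *.
have hy1 : 1 <= y by apply: le_trans hy.
have hln : ln x <= y / e.
  have h1 : ln y = e * ln x by rewrite /y ln_powR.
  have h2 : ln y <= y - 1.
    have h3 : -1 < y - 1 by lra.
    by have := le_ln1Dx h3; rewrite (addrC 1) subrK.
  rewrite ler_pdivlMr // mulrC -h1; apply: le_trans h2 _; rewrite lerBlDr lerDl; exact: ler01.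
set z := x `^ s.
have hz : 0 <= z by apply: powR_ge0.
have htau : x `^ tau = y * y * z.
  have -> : tau = e + (e + s) by rewrite /e; field.
  rewrite powRD; last by rewrite (gt_eqF hx0) implybT.
  rewrite powRD; last by rewrite (gt_eqF hx0) implybT.
  by rewrite mulrA.
rewrite htau.
have p1 : 0 <= (y - 2 * a0) * z by rewrite mulr_ge0 // subr_ge0; apply: le_trans hy.
have p2 : 0 <= (y - 1) * (y * z) by rewrite mulr_ge0 ?subr_ge0 // mulr_ge0 //; apply: le_trans hy1; exact: ler01.
have p3 : 0 <= (y - 2 * b0 / e) * (y * z).
  by rewrite mulr_ge0 ?subr_ge0 // ?mulr_ge0 //; [apply: le_trans hy | apply: le_trans hy1; exact: ler01].
have p4 : 0 <= b0 * z * (y / e - ln x) by rewrite mulr_ge0 ?mulr_ge0 // subr_ge0.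
have e1 : y * y * z - (a0 * z + b0 * ln x * z) =
  ((y - 1) * (y * z) + (y - 2 * a0) * z + (y - 2 * b0 / e) * (y * z)) / 2 + b0 * z * (y / e - ln x).
  rewrite /e; field.
  by rewrite subr_eq0 gt_eqF.
rewrite -subr_ge0 e1; apply: addr_ge0 => //; apply: divr_ge0; last by [].
by apply: addr_ge0 => //; apply: addr_ge0.
Qed.

Lemma nat_le_pow (R : realType) (K : R) n : 2 <= K -> n%:R <= K ^+ n.
Proof.
move=> hK; elim: n => [|n IH]; first by rewrite expr0 ler01.
have h1 : 1 <= K ^+ n by apply: exprn_ege1; lra.
rewrite -natr1 exprS.
have p : 0 <= (K - 2) * K ^+ n by rewrite mulr_ge0 ?subr_ge0 //; lra.
nra.
Qed.

Lemma growth_real (R : realType) (g : R -> R) (k : nat) (r D al tau : R) :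
  (2 <= k)%N -> 1 <= r -> 1 <= D -> 0 <= al -> ln r / ln (k%:R) < tau ->
  (forall t, 1 <= g t) -> (forall t, g t <= expR (`|t| * al)) ->
  (forall t, g (k%:R * t) <= D * g t `^ r) ->
  exists T, forall t, T <= `|t| -> g t <= expR (`|t| `^ tau).
Proof.
move=> hk hr hD hal htau hg1 hgb hgs.
set K : R := k%:R.
have hK2 : 2 <= K by rewrite /K ler_nat.
have hK0 : 0 < K by lra.
have hK1 : 1 < K by lra.
set lk := ln K.
have hlk : 0 < lk := ln_gt0 hK1.
set s := ln r / lk.
have hs0 : 0 <= s by rewrite /s divr_ge0 ?ln_ge0 // ltW.
set lD := ln D.
have hlD : 0 <= lD := ln_ge0 hD.
have hr0 : 0 < r by lra.
have hKs : K `^ s = r.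
  rewrite /powR (gt_eqF hK0) /s -/lk divfK ?gt_eqF //.
  by rewrite lnK // posrE.
have ind : forall n t, `|t| <= K ^+ n -> g t <= expR ((al + n%:R * lD) * r ^+ n).
  elim => [|n IH] t ht.
    rewrite expr0 in ht; rewrite expr0 mulr1 mul0r addr0.
    apply: le_trans (hgb t) _; rewrite ler_expR.
    by rewrite -{2}(mul1r al) ler_wpM2r.
  set s' := t / K.
  have ets : t = K * s' by rewrite /s' mulrC divfK ?gt_eqF.
  have hs' : `|s'| <= K ^+ n.
    rewrite /s' normrM normfV (gtr0_norm hK0) ler_pdivrMr //.
    by rewrite mulrC -exprS.
  have h1 := hgs s'; rewrite -/K -ets in h1.
  have h2 : g s' `^ r <= (expR ((al + n%:R * lD) * r ^+ n)) `^ r.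
    apply: ge0_ler_powR; rewrite ?nnegrE ?expR_ge0 //; first lra.
      by apply: le_trans (hg1 s'); exact: ler01.
    exact: IH.
  rewrite -expRM in h2.
  have hDe : D = expR lD by rewrite /lD lnK // posrE; lra.
  apply: le_trans h1 _; apply: le_trans (ler_wpM2l _ h2) _; first lra.
  rewrite hDe -expRD ler_expR.
  have hP : 1 <= r ^+ n by apply: exprn_ege1.
  have q : 0 <= lD * (r * r ^+ n - 1).
    rewrite mulr_ge0 // subr_ge0; nra.
  rewrite -natr1 exprS.
  lra.
have [T0 [hT1 hT]] := @final_ineq R s tau ((al + lD) * r) (lD * r / lk) hs0 htau
  (mulr_ge0 (addr_ge0 hal hlD) (ltW hr0)) (divr_ge0 (mulr_ge0 hlD (ltW hr0)) (ltW hlk)).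
exists T0 => t ht.
have ht1 : 1 <= `|t| by apply: le_trans ht.
have ht0 : 0 < `|t| by lra.
set L := ln `|t|.
have hL : 0 <= L := ln_ge0 ht1.
have [N hN] : exists N, `|t| <= K ^+ N.
  exists (Num.Def.archi_bound `|t|).
  apply: le_trans (ltW (archi_boundP (normr_ge0 t))) _; exact: nat_le_pow.
case: (ex_minnP (ex_intro (fun n => `|t| <= K ^+ n) N hN)) => n0 hn0 hmin.
have hg := ind n0 t hn0.
have hts1 : 1 <= `|t| `^ s.
  by rewrite -(powRr0 `|t|); apply: ler_powR.
have [hb1 hb2] : r ^+ n0 <= r * `|t| `^ s /\ n0%:R <= 1 + L / lk.
  case: n0 hn0 hmin hg => [|m] hn0 hmin hg.
    split; first by rewrite expr0; nra.
    have : 0 <= L / lk by rewrite divr_ge0 // ltW.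
    lra.
  have hlt : K ^+ m < `|t|.
    rewrite ltNge; apply/negP => hle.
    by have := hmin m hle; rewrite ltnn.
  have hKm0 : 0 < K ^+ m by apply: exprn_gt0.
  split.
    rewrite exprS; apply: ler_wpM2l; first lra.
    have -> : r ^+ m = (K ^+ m) `^ s.
      rewrite -hKs -powR_mulrn ?powR_ge0 // -powR_mulrn; last lra.
      by rewrite -!powRrM mulrC.
    apply: ge0_ler_powR; rewrite ?nnegrE //; lra.
  have hlm : m%:R * lk < L.
    rewrite /L mulr_natl.
    have -> : lk *+ m = ln (K ^+ m) by rewrite lnXn.
    by rewrite ltr_ln // posrE.
  have : m%:R < L / lk by rewrite ltr_pdivlMr.
  rewrite -natr1; lra.
apply: le_trans hg _; rewrite ler_expR.
apply: le_trans (hT `|t| ht); rewrite -/L.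
have e1 : (al + (1 + L / lk) * lD) * (r * `|t| `^ s)
  = (al + lD) * r * `|t| `^ s + lD * r / lk * L * `|t| `^ s by ring.
rewrite -e1; apply: ler_pM.
- by apply: addr_ge0 => //; apply: mulr_ge0 => //; exact: ler0n.
- by apply: exprn_ge0; lra.
- by apply: lerD => //; apply: ler_wpM2r.
- exact: hb1.
Qed.

End Aux.
Import Aux.
Unset Implicit Arguments.
Set Strict Implicit.
Set Printing Implicit Defensive.

Theorem proposition3p5 (R : realType) (B : lmodType R[i])
  (mul : B -> B -> B) (star : B -> B) (nB : B -> R)
  (A : set B) (nA : B -> R) (k : nat) (p q : R) :
  is_Cstar_algebra mul star nB ->
  is_kpq_differential_subalgebra mul star nB A nA k p q ->
  forall a : B, A a -> star a = a ->
  forall tau : R, ln (Num.max (k%:R - 1) p) / ln (k%:R) < tau ->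
  exists M T : R, 0 < M /\
    forall t : R, T <= `|t| ->
      nA (u mul A nA ((t%:C)%C *: a)) <= M * expR (`|t| `^ tau).
Proof.
move=> hCs hdiff a ha hsa tau htau.
case: hCs => hm hinv hnB hBsub [hcompB hCid].
case: hdiff => [[[[hA0 hAD hAZ hAM hAs] [hnA hAsub hcompA hcont]] hk hp hq hpq] [C hC hineq]].
set r := Num.max (k%:R - 1) p.
have hr : 1 <= r.
  rewrite le_max; apply/orP; left.
  have : (2 : R) <= k%:R by rewrite ler_nat.
  lra.
have hD : 1 <= C * 2 `^ q + 4 ^+ k.
  apply: ler_wpDl; first by rewrite mulr_ge0 ?powR_ge0 // ltW.
  by apply: exprn_ege1; lra.
have [T hT] := @growth_real R (gg mul A nA a) k r (C * 2 `^ q + 4 ^+ k) (nA a) tau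
  hk hr hD (nA_ge0 hA0 hAD hAZ hnA ha) htau
  (gg_ge1 hm hA0 hAD hAZ hAM hnA hAsub hcompA ha hinv hAs hcont hsa hnB hBsub hCid hk hp hq hC hineq)
  (gg_base hm hA0 hAD hAZ hAM hnA hAsub hcompA ha hinv hAs hcont hsa hnB hBsub hCid hk hp hq hC hineq)
  (gg_step hm hA0 hAD hAZ hAM hnA hAsub hcompA ha hinv hAs hcont hsa hnB hBsub hCid hk hp hq hC hineq).
exists 1, T; split; first exact: ltr01.
move=> t ht; rewrite mul1r (u_eq hm hA0 hAD hAZ hAM hnA hAsub hcompA ha hinv hAs hcont hsa hnB hBsub hCid).
apply: le_trans (hT t ht).
by rewrite /gg le_max lexx orbT.
Qed.
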